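(* Let $(A,\mu,\alpha,\beta)$ be a BiHom-commutative algebra (with $\mu(a\otimes b)=a\cdot b$) and let $D:A\to A$ be a derivation in the usual sense, i.e. $D(x\cdot y)=x\cdot D(y)+D(x)\cdot y$ for all $x,y$, commuting with $\alpha$ and $\beta$. Define $a\ast b=a\cdot D(b)$. Then $(A,\ast,\alpha,\beta)$ is a BiHom-Novikov algebra.
   Context: Work over a field. A BiHom-associative algebra is a 4-tuple $(A,\mu,\alpha,\beta)$ with $\alpha,\beta$ commuting linear maps, multiplicative for $\mu$, and $\alpha(x)\cdot(y\cdot z)=(x\cdot y)\cdot\beta(z)$; it is BiHom-commutative if $\beta(a)\cdot\alpha(b)=\beta(b)\cdot\alpha(a)$ for all $a,b$. A BiHom-Novikov algebra is a 4-tuple $(A,\ast,\alpha,\beta)$ with commuting linear maps $\alpha,\beta$ multiplicative for $\ast$ such that for all $x,y,z$: $(\beta(x)\ast\alpha(y))\ast\beta(z)-\alpha\beta(x)\ast(\alpha(y)\ast z)=(\beta(y)\ast\alpha(x))\ast\beta(z)-\alpha\beta(y)\ast(\alpha(x)\ast z)$ and $(x\ast\beta(y))\ast\alpha\beta(z)=(x\ast\beta(z))\ast\alpha\beta(y)$. *)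

(* Defs.v *)
From HB Require Import structures.
From mathcomp Require Import all_boot all_order all_algebra.
Set Implicit Arguments. Unset Strict Implicit. Unset Printing Implicit Defensive.
Import GRing.Theory.
Local Open Scope ring_scope.

Definition bilinear_op (K : fieldType) (A : lmodType K) (mul : A -> A -> A) : Prop :=
  (forall (k : K) (x y z : A), mul (k *: x + y) z = k *: mul x z + mul y z) /\
  (forall (k : K) (x y z : A), mul x (k *: y + z) = k *: mul x y + mul x z).

Definition bihom_maps (K : fieldType) (A : lmodType K) (mul : A -> A -> A)
    (alpha beta : A -> A) : Prop :=
  linear alpha /\ linear beta /\
  (forall x, alpha (beta x) = beta (alpha x)) /\
  (forall x y, alpha (mul x y) = mul (alpha x) (alpha y)) /\
  (forall x y, beta (mul x y) = mul (beta x) (beta y)).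

Definition BiHomAssociative (K : fieldType) (A : lmodType K) (mul : A -> A -> A)
    (alpha beta : A -> A) : Prop :=
  bilinear_op mul /\ bihom_maps mul alpha beta /\
  (forall x y z, mul (alpha x) (mul y z) = mul (mul x y) (beta z)).

Definition BiHomCommutativeAlgebra (K : fieldType) (A : lmodType K) (mul : A -> A -> A)
    (alpha beta : A -> A) : Prop :=
  BiHomAssociative mul alpha beta /\
  (forall a b, mul (beta a) (alpha b) = mul (beta b) (alpha a)).

Definition BiHomNovikov (K : fieldType) (A : lmodType K) (ast : A -> A -> A)
    (alpha beta : A -> A) : Prop :=
  bilinear_op ast /\ bihom_maps ast alpha beta /\
  (forall x y z,
      ast (ast (beta x) (alpha y)) (beta z) - ast (alpha (beta x)) (ast (alpha y) z)
    = ast (ast (beta y) (alpha x)) (beta z) - ast (alpha (beta y)) (ast (alpha x) z)) /\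
  (forall x y z,
      ast (ast x (beta y)) (alpha (beta z)) = ast (ast x (beta z)) (alpha (beta y))).

(* Main.v *)
Require Import Defs.
From HB Require Import structures.
From mathcomp Require Import all_boot all_order all_algebra.
Import GRing.Theory.
Local Open Scope ring_scope.

Theorem corollary2p9 (K : fieldType) (A : lmodType K) (mul : A -> A -> A)
    (alpha beta : A -> A) (D : A -> A) :
  BiHomCommutativeAlgebra mul alpha beta ->
  linear D ->
  (forall x y, D (mul x y) = mul x (D y) + mul (D x) y) ->
  (forall x, D (alpha x) = alpha (D x)) ->
  (forall x, D (beta x) = beta (D x)) ->
  BiHomNovikov (fun a b => mul a (D b)) alpha beta.
Proof.
move=> [[[bl br] [[la [lb [ab [ma mb]]]] asc]] com] lD Dm Da Db.
have addl : forall x y z, mul x (y + z) = mul x y + mul x z.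
  by move=> x y z; have := br 1 x y z; rewrite !scale1r.
have key : forall x y w, mul (alpha (beta x)) (mul (alpha y) w)
                         = mul (alpha (beta y)) (mul (alpha x) w).
  move=> x y w; rewrite asc com -asc //.
split.
  split=> k x y z; first by rewrite bl.
  by rewrite lD br.
split.
  do 2 (split; first by []).
  split; first by [].
  by split=> x y; [rewrite ma Da | rewrite mb Db].
split.
  move=> x y z.
  rewrite !Da !Db !Dm !addl -!asc !Da (key x y (D (D z))).
  have h : forall a b : A, a - (b + a) = - b.
    by move=> a b; rewrite opprD addrCA subrr addr0.
  by rewrite !h.
move=> x y z.
rewrite !Da !Db !ab -!asc.
by rewrite com.
Qed.
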